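(* Let $\widetilde{\Sigma}_1,\ldots,\widetilde{\Sigma}_n$ be pairwise disjoint visibly pushdown alphabets with semantics $\mathcal{F}_k$, and let $\mathcal{M}$ and $\mathcal{S}$ be the $n$-stack and single-stack semantics defined in the context. For every well-nested word $\rho$ over $\widetilde{\Sigma}=\widetilde{\Sigma}_1\uplus\cdots\uplus\widetilde{\Sigma}_n$ without pending returns, every tuple of stacks $\vec{S}\in\prod_{j=1}^n\mathrm{stack}(V_j)$ and every stack $S\in\mathrm{stack}(V)$: if $\mathrm{top}(\vec{S})=\mathrm{top}(S)$, then $\{\mathrm{top}(\vec{T}):(\vec{S},\vec{T})\in\mathcal{M}(\rho)\}=\{\mathrm{top}(T):(S,T)\in\mathcal{S}(\rho)\}$.
   Context: A visibly pushdown (VP) alphabet is a finite alphabet partitioned into calls, returns and internals; $\Sigma^{\mathsf{call}}_k,\Sigma^{\mathsf{ret}}_k,\Sigma^{\mathsf{int}}_k$ are those of $\widetilde{\Sigma}_k$. Calls and returns are matched like parentheses (internals ignored); unmatched returns are pending returns. A word over $\widetilde{\Sigma}$ is well-nested if every matched call–return pair consists of letters from the same $\widetilde{\Sigma}_k$. Program $k$ has its own variables (disjoint across programs), $V_k$ its set of valuations, $V$ the set of valuations of all variables, identified with tuples $\nu=(\nu|_1,\ldots,\nu|_n)$, $\nu|_j\in V_j$. $\mathrm{stack}(X)$ is the set of nonempty finite stacks of frames in $X$; $S.\nu$ denotes a stack with top frame $\nu$ and rest $S$; $\mathrm{top}(S.\nu)=\nu$ and $\mathrm{top}(S_1,\ldots,S_n)=(\mathrm{top}(S_1),\ldots,\mathrm{top}(S_n))\in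 V$. Semantics $\mathcal{F}_k$: for $c\in\Sigma^{\mathsf{call}}_k$, $\mathcal{F}_k(c):V_k\to2^{V_k}$; for $r\in\Sigma^{\mathsf{ret}}_k$, $\mathcal{F}_k(r):V_k\times V_k\to2^{V_k}$; for $a\in\Sigma^{\mathsf{int}}_k$, $\mathcal{F}_k(a):V_k\to2^{V_k}$. $\mathcal{M}$: for $x\in\widetilde{\Sigma}_k$, $\mathcal{M}(x)$ relates tuples of stacks leaving components $j\ne k$ unchanged and changing the $k$-th: call $S.\nu\mapsto S.\nu.\nu'$ with $\nu'\in\mathcal{F}_k(x)(\nu)$; return $S.\nu_<.\nu\mapsto S.\nu'$ with $\nu'\in\mathcal{F}_k(x)(\nu,\nu_<)$; internal $S.\nu\mapsto S.\nu'$ with $\nu'\in\mathcal{F}_k(x)(\nu)$. $\mathcal{S}$ on stacks over $V$, for $x\in\widetilde{\Sigma}_k$: call $S.\nu\mapsto S.\nu.\nu'$ with $\nu'|_k\in\mathcal{F}_k(x)(\nu|_k)$, $\nu'|_j=\nu|_j$ for $j\ne k$; return $S.\nu_<.\nu\mapsto S.\nu'$ with $\nu'|_k\in\mathcal{F}_k(x)(\nu|_k,\nu_<|_k)$, $\nu'|_j=\nu|_j$ for $j\ne k$; internal $S.\nu\mapsto S.\nu'$ with $\nu'|_k\in\mathcal{F}_k(x)(\nu|_k)$, $\nu'|_j=\nu|_j$ for $j\ne k$. Both are extended to words by relational composition. *)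

(* Defs.v *)
From mathcomp Require Import all_boot.
Unset Printing Implicit Defensive.

Inductive vkind := VCall | VRet | VInt.

(* Nonempty stacks of frames in X: (top frame, rest of the stack listed from
   the frame just below the top downwards).  The stack S.nu is (nu, S). *)
Definition stack (X : Type) := (X * seq X)%type.
Definition top {X : Type} (s : stack X) : X := s.1.

Section VP.
Variables (n : nat) (Sig : finType) (prog : Sig -> 'I_n) (kind : Sig -> vkind)
  (V : 'I_n -> Type).
(* F1 x nu nu'       : nu' \in F_k(x)(nu)          for calls and internals x
   F2 x nu nu_lt nu' : nu' \in F_k(x)(nu, nu_lt)   for returns x              *)
Variables (F1 : forall x : Sig, V (prog x) -> V (prog x) -> Prop)
          (F2 : forall x : Sig, V (prog x) -> V (prog x) -> V (prog x) -> Prop).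

Definition Val := forall j : 'I_n, V j.
Definition stacks := forall j : 'I_n, stack (V j).
Definition tops (S : stacks) : Val := fun j => top (S j).

Definition local_step (x : Sig) (s t : stack (V (prog x))) : Prop :=
  match kind x with
  | VCall => exists nu', F1 x s.1 nu' /\ t = (nu', s.1 :: s.2)
  | VInt  => exists nu', F1 x s.1 nu' /\ t = (nu', s.2)
  | VRet  => match s.2 with
             | nu_lt :: rest => exists nu', F2 x s.1 nu_lt nu' /\ t = (nu', rest)
             | [::] => False
             end
  end.

Definition M_step (x : Sig) (S T : stacks) : Prop :=
  (forall j, j <> prog x -> T j = S j) /\ local_step x (S (prog x)) (T (prog x)).

Definition S_step (x : Sig) (s t : stack Val) : Prop :=
  match kind x with
  | VCall => exists nu' : Val, F1 x (s.1 (prog x)) (nu' (prog x)) /\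
             (forall j, j <> prog x -> nu' j = s.1 j) /\ t = (nu', s.1 :: s.2)
  | VInt  => exists nu' : Val, F1 x (s.1 (prog x)) (nu' (prog x)) /\
             (forall j, j <> prog x -> nu' j = s.1 j) /\ t = (nu', s.2)
  | VRet  => match s.2 with
             | nu_lt :: rest => exists nu' : Val,
                 F2 x (s.1 (prog x)) (nu_lt (prog x)) (nu' (prog x)) /\
                 (forall j, j <> prog x -> nu' j = s.1 j) /\ t = (nu', rest)
             | [::] => False
             end
  end.

Fixpoint word_rel {A : Type} (step : Sig -> A -> A -> Prop) (w : seq Sig)
  (a b : A) : Prop :=
  match w with
  | [::] => a = b
  | x :: w' => exists c, step x a c /\ word_rel step w' c b
  end.

Definition M_sem := word_rel M_step.
Definition S_sem := word_rel S_step.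

(* Matching of calls and returns like parentheses: st is the list of programs
   of currently open (unmatched so far) calls, innermost first.  A return
   with no open call is pending (unmatched).  Well-nested: every matched
   call/return pair belongs to the same program. *)
Fixpoint well_nested_from (st : seq 'I_n) (w : seq Sig) : bool :=
  match w with
  | [::] => true
  | x :: w' =>
    match kind x with
    | VCall => well_nested_from (prog x :: st) w'
    | VInt => well_nested_from st w'
    | VRet => match st with
              | [::] => well_nested_from [::] w'
              | k :: st' => (k == prog x) && well_nested_from st' w'
              end
    end
  end.
Definition well_nested (w : seq Sig) := well_nested_from [::] w.

Fixpoint no_pending_from (d : nat) (w : seq Sig) : bool :=
  match w with
  | [::] => true
  | x :: w' =>
    match kind x with
    | VCall => no_pending_from d.+1 w'
    | VInt => no_pending_from d w'
    | VRet => if d is d'.+1 then no_pending_from d' w' else false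
    end
  end.
Definition no_pending_returns (w : seq Sig) := no_pending_from 0 w.
End VP.

(* Main.v *)
Require Import Defs.
From mathcomp Require Import all_boot.

Set Implicit Arguments.
Section Pf.
Variables (n : nat) (Sig : finType) (prog : Sig -> 'I_n) (kind : Sig -> vkind)
  (V : 'I_n -> Type).
Variables (F1 : forall x : Sig, V (prog x) -> V (prog x) -> Prop)
          (F2 : forall x : Sig, V (prog x) -> V (prog x) -> V (prog x) -> Prop).

Local Notation Val := (Val n V).
Local Notation stacks := (stacks n V).
Local Notation tops := (tops n V).
Local Notation Mstep := (M_step n Sig prog kind V F1 F2).
Local Notation Sstep := (S_step n Sig prog kind V F1 F2).

Fixpoint proj (j : 'I_n) (st : seq 'I_n) (fs : seq Val) : seq (V j) :=
  match st, fs with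
  | k :: st', f :: fs' => if k == j then f j :: proj j st' fs' else proj j st' fs'
  | _, _ => [::]
  end.

Definition R st (X : stacks) (Y : stack Val) :=
  tops X = Y.1 /\ exists fs rest, Y.2 = fs ++ rest /\ size fs = size st /\
    forall j, exists r, (X j).2 = proj j st fs ++ r.

Definition nextst (st : seq 'I_n) x :=
  match kind x with VCall => prog x :: st | VInt => st | VRet => behead st end.

Definition okst (st : seq 'I_n) x := kind x = VRet -> exists st', st = prog x :: st'.

Lemma fwd st X Y x X1 : R st X Y -> okst st x -> Mstep x X X1 ->
  exists Y1, Sstep x Y Y1 /\ R (nextst st x) X1 Y1.
Proof.
case: Y => y ys. move=> [/= Htop [fs [rest [Hys [Hsz Hpr]]]]] Hok [Hoth Hloc].
rewrite /nextst /S_step /=. move: Hloc Hok. rewrite /local_step.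
case Hk: (kind x) => Hloc Hok.
- case: Hloc => nu [HF HX1].
  exists (tops X1, y :: ys). split.
  + exists (tops X1). split; first by rewrite /tops /top HX1 /= -Htop.
    split; last by []. move=> j hj. by rewrite /tops /top Hoth // -Htop.
  + split; first by []. exists (y :: fs), rest. split; first by rewrite Hys.
    split; first by rewrite /= Hsz. move=> j. case: (eqVneq j (prog x)) => [->|hne].
    * case: (Hpr (prog x)) => r Hr. exists r. by rewrite HX1 /= eqxx Hr -Htop.
    * case: (Hpr j) => r Hr. exists r. by rewrite (Hoth _ (elimN eqP hne)) Hr /= eq_sym (negbTE hne).
- case: (Hok Hk) => st' Hst. subst st.
  case: fs Hsz Hys Hpr => [|f fs] //= [Hsz] Hys Hpr.
  case: (Hpr (prog x)) => r Hr. rewrite /= eqxx in Hr.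
  rewrite Hr /= in Hloc. case: Hloc => nu [HF HX1].
  rewrite Hys /=.
  exists (tops X1, fs ++ rest). split.
  + exists (tops X1). split; first by rewrite /tops /top HX1 /= -Htop.
    split; last by []. move=> j hj. by rewrite /tops /top Hoth // -Htop.
  + split; first by []. exists fs, rest. split; first by [].
    split; first by []. move=> j. case: (eqVneq j (prog x)) => [->|hne].
    * exists r. by rewrite HX1.
    * case: (Hpr j) => r' Hr'. exists r'. rewrite (Hoth _ (elimN eqP hne)) Hr' /=.
      by rewrite eq_sym (negbTE hne).
- case: Hloc => nu [HF HX1].
  exists (tops X1, ys). split.
  + exists (tops X1). split; first by rewrite /tops /top HX1 /= -Htop.
    split; last by []. move=> j hj. by rewrite /tops /top Hoth // -Htop.
  + split; first by []. exists fs, rest. split; first by [].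
    split; first by []. move=> j. case: (eqVneq j (prog x)) => [->|hne].
    * case: (Hpr (prog x)) => r Hr. exists r. by rewrite HX1 /= Hr.
    * case: (Hpr j) => r Hr. exists r. by rewrite (Hoth _ (elimN eqP hne)).
Qed.

Lemma bwd st X Y x Y1 : R st X Y -> okst st x -> Sstep x Y Y1 ->
  exists X1, Mstep x X X1 /\ R (nextst st x) X1 Y1.
Proof.
case: Y => y ys. move=> [/= Htop [fs [rest [Hys [Hsz Hpr]]]]] Hok.
have Hy : forall j, y j = (X j).1 by move=> j; rewrite -Htop.
rewrite /nextst /S_step /M_step /local_step /=. move: Hok.
case Hk: (kind x) => Hok.
- case=> nu [HF [Hoth ->]].
  exists (fun j => (nu j, if j == prog x then (X j).1 :: (X j).2 else (X j).2)).
  split; first split.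
  + move=> j hj. rewrite (introF eqP hj) Hoth // Hy. by case: (X j).
  + rewrite eqxx. exists (nu (prog x)). split; last by [].
    by rewrite -Hy.
  + split; first by []. exists (y :: fs), rest. split; first by rewrite Hys.
    split; first by rewrite /= Hsz. move=> j. case: (eqVneq j (prog x)) => [->|hne].
    * case: (Hpr (prog x)) => r Hr. exists r. by rewrite /= eqxx Hr Hy.
    * case: (Hpr j) => r Hr. exists r. by rewrite /= eq_sym (negbTE hne).
- case: (Hok Hk) => st' Hst. subst st.
  case: fs Hsz Hys Hpr => [|f fs] //= [Hsz] Hys Hpr.
  case: (Hpr (prog x)) => r Hr. rewrite /= eqxx in Hr.
  rewrite Hys /=. case=> nu [HF [Hoth ->]].
  exists (fun j => (nu j, if j == prog x then behead (X j).2 else (X j).2)).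
  split; first split.
  + move=> j hj. rewrite (introF eqP hj) Hoth // Hy. by case: (X j).
  + rewrite eqxx Hr /=. exists (nu (prog x)). split; last by [].
    by rewrite -Hy.
  + split; first by []. exists fs, rest. split; first by [].
    split; first by []. move=> j. case: (eqVneq j (prog x)) => [->|hne].
    * exists r. by rewrite /= Hr.
    * case: (Hpr j) => r' Hr'. exists r'. rewrite /= Hr' /=.
      by rewrite eq_sym (negbTE hne).
- case=> nu [HF [Hoth ->]].
  exists (fun j => (nu j, (X j).2)).
  split; first split.
  + move=> j hj. rewrite Hoth // Hy. by case: (X j).
  + exists (nu (prog x)). split; last by []. by rewrite -Hy.
  + split; first by []. exists fs, rest. split; first by [].
    split; first by []. move=> j. case: (Hpr j) => r Hr. by exists r.
Qed.

Lemma ok_next st x w :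
  well_nested_from n Sig prog kind st (x :: w) ->
  no_pending_from Sig kind (size st) (x :: w) ->
  [/\ okst st x, well_nested_from n Sig prog kind (nextst st x) w &
      no_pending_from Sig kind (size (nextst st x)) w].
Proof.
rewrite /okst /nextst /=. case: (kind x) => //.
case: st => [|k st] //= /andP [/eqP -> H1] H2. split => //. by exists st.
Qed.

Lemma main rho : forall st X Y (nu : Val), R st X Y ->
  well_nested_from n Sig prog kind st rho ->
  no_pending_from Sig kind (size st) rho ->
  (exists X', M_sem n Sig prog kind V F1 F2 rho X X' /\ tops X' = nu) <->
  (exists Y', S_sem n Sig prog kind V F1 F2 rho Y Y' /\ top Y' = nu).
Proof.
elim: rho => [|x w IH] st X Y nu HR Hwn Hnp.
- case: HR => Htop _. split.
  + case=> X' [/= <- <-]. by exists Y.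
  + case=> Y' [/= <- <-]. by exists X.
- case: (@ok_next st x w Hwn Hnp) => Hok Hwn' Hnp'. split.
  + case=> X' [[X1 [Hs Hw]] Ht].
    case: (fwd HR Hok Hs) => Y1 [HS HR1].
    case: ((IH _ _ _ nu HR1 Hwn' Hnp').1 (ex_intro _ X' (conj Hw Ht))) => Y' [HY' Ht'].
    exists Y'. split => //. by exists Y1.
  + case=> Y' [[Y1 [Hs Hw]] Ht].
    case: (@bwd st X Y x Y1 HR Hok Hs) => X1 [HM HR1].
    case: ((IH _ _ _ nu HR1 Hwn' Hnp').2 (ex_intro _ Y' (conj Hw Ht))) => X' [HX' Ht'].
    exists X'. split => //. by exists X1.
Qed.

End Pf.

Theorem lemmaC2 (n : nat) (Sig : finType) (prog : Sig -> 'I_n)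
  (kind : Sig -> vkind) (V : 'I_n -> Type)
  (F1 : forall x : Sig, V (prog x) -> V (prog x) -> Prop)
  (F2 : forall x : Sig, V (prog x) -> V (prog x) -> V (prog x) -> Prop)
  (rho : seq Sig) (Svec : stacks n V) (S : stack (Val n V)) :
  well_nested n Sig prog kind rho ->
  no_pending_returns Sig kind rho ->
  tops n V Svec = top S ->
  forall nu : Val n V,
    (exists Tvec : stacks n V,
        M_sem n Sig prog kind V F1 F2 rho Svec Tvec /\ tops n V Tvec = nu) <->
    (exists T : stack (Val n V),
        S_sem n Sig prog kind V F1 F2 rho S T /\ top T = nu).
Proof.
move=> Hwn Hnp Htop nu.
apply: (@main n Sig prog kind V F1 F2 rho [::] Svec S nu) => //.
split; first by [].
exists [::], S.2. split; first by case: S {Htop}.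
split; first by []. move=> j. by exists (Svec j).2.
Qed.
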